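(* Let $G$ be a finite graph with $n$ vertices and maximum degree at most $\Delta$. For any $\epsilon>0$, taking $\lambda=e^{\frac{\Delta\log 2}{2\epsilon}}$, the average matching size $E(G,\lambda)$ is an $\epsilon n$-approximation of the maximum matching size of $G$, i.e. $|E(G,\lambda)-\mathrm{OPT}|\le\epsilon n$ where $\mathrm{OPT}$ is the size of a maximum matching.
   Context: For a finite graph $G$ and $\lambda>0$, $E(G,\lambda)=\sum_{M}|M|\lambda^{|M|}/Z(G,\lambda)$ with $Z(G,\lambda)=\sum_M\lambda^{|M|}$, both sums over all matchings $M$ of $G$. *)

(* Defs.v *)
From mathcomp Require Import all_boot all_order all_algebra.
From mathcomp Require Import reals.
From mathcomp.analysis Require Import sequences exp.
Set Implicit Arguments. Unset Strict Implicit. Unset Printing Implicit Defensive.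
Import Order.TTheory GRing.Theory Num.Theory.
Local Open Scope ring_scope.

(* A finite simple graph: vertex type T (finite), adjacency e : rel T,
   assumed symmetric and irreflexive (hypotheses of the theorem). *)

Definition edges (T : finType) (e : rel T) : {set {set T}} :=
  [set [set x; y] | x in T, y in T & e x y].

Definition is_matching (T : finType) (e : rel T) (M : {set {set T}}) : bool :=
  (M \subset edges e) && trivIset M.

Definition matchings (T : finType) (e : rel T) : {set {set {set T}}} :=
  [set M | is_matching e M].

Definition deg (T : finType) (e : rel T) (v : T) : nat := #|[set u | e v u]|.

Definition OPT (T : finType) (e : rel T) : nat :=
  \max_(M in matchings e) #|M|.

Definition Zm (R : realType) (T : finType) (e : rel T) (lam : R) : R :=
  \sum_(M in matchings e) lam ^+ #|M|.

Definition Em (R : realType) (T : finType) (e : rel T) (lam : R) : R :=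
  (\sum_(M in matchings e) (#|M|%:R * lam ^+ #|M|)) / Zm e lam.

(* Main.v *)
Require Import Defs.
From mathcomp Require Import all_boot all_order all_algebra.
From mathcomp Require Import reals.
From mathcomp.analysis Require Import sequences exp.
From mathcomp Require Import ring lra.
Import Order.TTheory GRing.Theory Num.Theory.
Local Open Scope ring_scope.

Lemma set0_matching (T : finType) (e : rel T) : set0 \in matchings e.
Proof.
rewrite inE /is_matching sub0set /=.
by rewrite /trivIset /cover !big_set0 cards0.
Qed.

Lemma opt_attained (T : finType) (e : rel T) :
  exists2 M, M \in matchings e & #|M| = OPT e.
Proof.
have h : (0 < #|matchings e|)%N by apply/card_gt0P; exists set0; exact: set0_matching.
have [M HM HE] := eq_bigmax_cond (fun M : {set {set T}} => #|M|) h.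
by exists M => //; rewrite /OPT HE.
Qed.

Lemma size_le_opt (T : finType) (e : rel T) M : M \in matchings e -> (#|M| <= OPT e)%N.
Proof. by move=> HM; rewrite /OPT; apply: leq_bigmax_cond. Qed.

Lemma matchings_card (T : finType) (e : rel T) : (#|matchings e| <= 2 ^ #|edges e|)%N.
Proof.
rewrite -card_powerset; apply: subset_leq_card; apply/subsetP => M.
by rewrite inE powersetE => /andP[].
Qed.

Lemma edges_bound (T : finType) (e : rel T) (e_sym : symmetric e) (e_irr : irreflexive e)
  (Delta : nat) (hdeg : forall v : T, (deg e v <= Delta)%N) :
  (2 * #|edges e| <= Delta * #|T|)%N.
Proof.
have h2 : forall S, S \in edges e -> #|S| = 2%N.
  move=> S /imset2P[x y _]; rewrite inE => /andP[_ exy] ->.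
  rewrite cards2; case: eqP => // exy'; by rewrite exy' e_irr in exy.
have -> : (2 * #|edges e| = \sum_(S in edges e) #|S|)%N.
  rewrite (eq_bigr (fun _ => 2%N)); last by move=> S /h2.
  by rewrite sum_nat_const mulnC.
have -> : (\sum_(S in edges e) #|S| = \sum_(v : T) #|[set S in edges e | v \in S]|)%N.
  rewrite (eq_bigr (fun S : {set T} => \sum_(v : T) (v \in S : nat))%N); last first.
    by move=> S _; rewrite -sum1_card big_mkcond.
  rewrite exchange_big /=; apply: eq_bigr => v _.
  rewrite -sum1_card [RHS]big_mkcond /= [LHS]big_mkcond /=.
  apply: eq_bigr => S _; rewrite !inE; by case: (S \in edges e); case: (v \in S).
rewrite mulnC -sum_nat_const; apply: leq_sum => v _.
apply: leq_trans (hdeg v).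
apply: leq_trans (leq_imset_card (fun u => [set v; u]) [set u | e v u]).
apply: subset_leq_card; apply/subsetP => S; rewrite inE => /andP[].
move=> /imset2P[x y _]; rewrite inE => /andP[_ exy] -> /set2P[] ->.
  by apply/imsetP; exists y => //; rewrite inE.
apply/imsetP; exists x; first by rewrite inE e_sym.
by rewrite /= setUC.
Qed.

Theorem lemma6 (R : realType) (T : finType) (e : rel T)
  (e_sym : symmetric e) (e_irr : irreflexive e)
  (Delta : nat) (hdeg : forall v : T, (deg e v <= Delta)%N)
  (eps : R) (heps : 0 < eps) :
  let lam := expR (Delta%:R * ln 2 / (2 * eps)) in
  `|Em e lam - (OPT e)%:R| <= eps * #|T|%:R.
Proof.
cbv zeta; set lam := expR _.
set s : R := Delta%:R * ln 2 / (2 * eps).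
set MS := matchings e.
set k := OPT e.
pose w (M : {set {set T}}) := lam ^+ #|M|.
have wE M : w M = expR (#|M|%:R * s) by rewrite expRM_natl.
have w_gt0 M : 0 < w M by rewrite wE expR_gt0.
have [Mo HMo HMk] := @opt_attained T e.
have ZE : Zm e lam = \sum_(M in MS) w M by [].
have Zk : w Mo <= Zm e lam.
  rewrite ZE (bigD1 Mo) //= lerDl; apply: sumr_ge0 => M _; exact: ltW.
have Z_gt0 : 0 < Zm e lam by apply: lt_le_trans Zk.
set Z := Zm e lam in ZE Zk Z_gt0 *.
set Sg := \sum_(M in MS) (#|M|%:R * w M).
have EE : Em e lam = Sg / Z by [].
have EleK : Em e lam <= k%:R.
  rewrite EE ler_pdivrMr // ZE mulr_sumr; apply: ler_sum => M HM.
  by apply: ler_wpM2r; [exact: ltW | rewrite ler_nat; exact: size_le_opt].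
have E_ge0 : 0 <= Em e lam.
  rewrite EE divr_ge0 ?(ltW Z_gt0) //; apply: sumr_ge0 => M _.
  by rewrite mulr_ge0 ?ler0n ?(ltW (w_gt0 M)).
rewrite ler0_norm ?subr_le0 // opprB.
have [D0|Dpos] := eqVneq Delta 0%N.
  have hE := @edges_bound T e e_sym e_irr Delta hdeg.
  rewrite D0 mul0n leqn0 muln_eq0 /= in hE.
  move/eqP/cards0_eq in hE.
  have : Mo \subset edges e by move: HMo; rewrite inE => /andP[].
  rewrite hE subset0 => /eqP Mo0.
  rewrite /k -HMk Mo0 cards0 sub0r.
  by apply: le_trans (_ : 0 <= _); rewrite ?oppr_le0 // mulr_ge0 ?ler0n ?ltW.
have s_gt0 : 0 < s.
  rewrite /s divr_gt0 ?mulr_gt0 ?ltr0n ?lt0n ?ln_gt0 ?ltr1n //.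
have N_gt0 : 0 < #|MS|%:R :> R.
  by rewrite ltr0n; apply/card_gt0P; exists set0; exact: set0_matching.
set N : R := #|MS|%:R in N_gt0 *.
have lnZk : k%:R * s <= ln Z.
  have : w Mo <= Z by [].
  rewrite wE -ler_ln ?posrE ?expR_gt0 // expRK HMk; exact: id.
have ent : (ln Z - ln N) * Z <= s * Sg.
  have H : \sum_(M in MS) (w M * (ln Z - ln N) - s * (#|M|%:R * w M))
           <= \sum_(M in MS) (Z / N - w M).
    apply: ler_sum => M _.
    set x := Z / (N * w M).
    have x_gt0 : 0 < x by rewrite /x divr_gt0 // mulr_gt0.
    have hl : ln x <= x - 1.
      have := @le_ln1Dx R (x - 1); have -> : 1 + (x - 1) = x by lra.
      by apply; lra.
    have hx : ln x = ln Z - ln N - #|M|%:R * s.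
      rewrite /x ln_div ?posrE ?mulr_gt0 // lnM ?posrE // wE expRK opprD addrA //.
    have hw : w M * (x - 1) = Z / N - w M.
      rewrite /x; field; rewrite ?gt_eqF //.
    have := ler_wpM2l (ltW (w_gt0 M)) hl; rewrite hw hx.
    move=> h; apply: le_trans h; rewrite le_eqVlt; apply/orP; left; apply/eqP; ring.
  move: H; rewrite !sumrB -!mulr_suml -!mulr_sumr -ZE sumr_const -/Sg.
  have -> : Z *+ #|MS| / N = Z by rewrite -mulr_natr -/N mulfK ?gt_eqF.
  by rewrite subrr subr_le0 mulrC.
have lnN : ln N <= #|edges e|%:R * ln 2.
  rewrite mulr_natl -lnXn // -natrX ler_ln ?posrE //; last by rewrite ltr0n expn_gt0.
  rewrite /N ler_nat.
  exact: matchings_card.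
have hE := @edges_bound T e e_sym e_irr Delta hdeg.
have hE' : 2 * #|edges e|%:R <= Delta%:R * #|T|%:R :> R.
  by rewrite -natrM -natrM ler_nat.
have sE : ln Z - ln N <= s * Em e lam.
  by rewrite EE mulrA ler_pdivlMr.
have key : s * (k%:R - Em e lam) <= s * (eps * #|T|%:R).
  have -> : s * (eps * #|T|%:R) = Delta%:R * #|T|%:R / 2 * ln 2.
    rewrite /s; field; rewrite gt_eqF //.
  have ln2 : 0 < ln (2 : R) by rewrite ln_gt0 ?ltr1n.
  have h1 : #|edges e|%:R * ln 2 <= Delta%:R * #|T|%:R / 2 * ln 2 :> R.
    have h0 : #|edges e|%:R <= Delta%:R * #|T|%:R / 2 :> R by rewrite ler_pdivlMr //; lra.
    by rewrite ler_pM2r.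
  lra.
by rewrite ler_pM2l in key.
Qed.
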